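(* Let $\alpha>1$ be a fixed constant and let $\log$ denote the base-$2$ logarithm. For a positive integer $M$, put $\mathcal{M}=\{1,\dots,M\}$, $K=\lceil(\log M)^{\alpha}\rceil$ and $K'=\lceil(\log K)^{\alpha}\rceil$. For a positive integer $l$ define $\phi_l:\mathbb{N}\to\{1,\dots,l\}$ by $\phi_l(x)=(x \bmod l)+1$, where $x\bmod l$ is the remainder of $x$ upon division by $l$. Let $\mathcal{A}$ be a randomized probable-prime generator: on input a positive integer $N$ and a parameter $\varepsilon>0$ it outputs an integer $p\in\{1,\dots,N\}$ such that every prime $\le N$ is output with the same probability and $\Pr[p \text{ is not prime}]\le\varepsilon$. Consider the following identification scheme over the noiseless binary channel (the receiver observes exactly the transmitted bits). Given a message $m\in\mathcal{M}$, the sender independently draws $k\gets\mathcal{A}(K,\varepsilon)$ and $l\gets\mathcal{A}(K',\varepsilon)$ and transmits the binary representation of $k$ (zero-padded to $\lceil\log K\rceil$ bits), the binary representation of $l$ (zero-padded to $\lceil\log K'\rceil$ bits), and the binary representation of $\phi_l(\phi_k(m))$ (zero-padded to $\lceil\log K'\rceil$ bits). So the block length is $n(M)=\lceil\log K\rceil+2\lceil\log K'\rceil$. A receiver interested in a message $\hat m\in\mathcal{M}$ reads $k,l$ and the tag $t=\phi_l(\phi_k(m))$ and declares ''$\hat m$ was sent'' if and only if $t=\phi_l(\phi_k(\hat m))$. The type I error probability for $m$ is the probability that the receiver interested in $\hat m=m$ declares ''not sent'', and the type II error probability for $m\neq\hat m$ is the probability that the receiver interested in $\hat m$ declares ''$\hat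 m$ was sent'' when $m$ is sent (probabilities over the randomness of $\mathcal{A}$). Then: (1) the type I error probability is $0$ for every $M$ and every $m\in\mathcal{M}$; (2) if the generator parameter $\varepsilon=\varepsilon_M$ is chosen so that $\varepsilon_M\to0$ as $M\to\infty$, then $\max_{m\neq\hat m\in\mathcal{M}}$ of the type II error probability tends to $0$ as $M\to\infty$ (equivalently, as the block length $n(M)\to\infty$); (3) $\displaystyle\lim_{M\to\infty}\frac{\log\log M}{n(M)}=\frac{1}{\alpha}$.
   Context: An example of such a generator $\mathcal{A}$ is repeated uniform sampling from $\{1,\dots,N\}$ followed by a Miller–Rabin primality test with sufficiently many rounds. The quantity $\frac{\log\log M}{n}$ is the (double-logarithmic) identification rate, so (3) says that identification rate $1/\alpha$ (arbitrarily close to $1$) is achieved. *)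

(* Defs.v *)
From HB Require Import structures.
From mathcomp Require Import all_boot all_order all_algebra.
From mathcomp Require Import all_classical all_reals all_analysis.
Set Implicit Arguments. Unset Strict Implicit. Unset Printing Implicit Defensive.
Import Order.TTheory GRing.Theory Num.Theory.
Import numFieldNormedType.Exports.
Local Open Scope ring_scope.

Section Defs.
Variable R : realType.

Definition log2 (x : R) : R := ln x / ln 2.

Definition ceil_nat (x : R) : nat := `|Num.ceil x|%N.

Definition Kpar (alpha : R) (M : nat) : nat := ceil_nat (powR (log2 M%:R) alpha).
Definition Kpar' (alpha : R) (M : nat) : nat := Kpar alpha (Kpar alpha M).

Definition phi (l x : nat) : nat := (x %% l).+1.

Definition blocklen (alpha : R) (M : nat) : nat :=
  ceil_nat (log2 (Kpar alpha M)%:R) + 2 * ceil_nat (log2 (Kpar' alpha M)%:R).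

(* A randomized generator is modelled by its output distribution:
   gen N eps x = Pr[ A(N, eps) outputs x ]. *)
Definition prob_prime_generator (gen : nat -> R -> nat -> R) : Prop :=
  forall (N : nat) (eps : R), (2 <= N)%N -> 0 < eps ->
    [/\ (forall x, 0 <= gen N eps x),
        (forall x, gen N eps x != 0 -> (1 <= x <= N)%N),
        \sum_(1 <= x < N.+1) gen N eps x = 1,
        (forall p q, prime p -> prime q -> (p <= N)%N -> (q <= N)%N ->
            gen N eps p = gen N eps q) &
        \sum_(1 <= x < N.+1 | ~~ prime x) gen N eps x <= eps].

(* Probability (over independent k <- A(K,eps), l <- A(K',eps)) that the
   receiver interested in mh declares "mh was sent" when m is sent. *)
Definition accept_prob (gen : nat -> R -> nat -> R) (alpha eps : R)
    (M m mh : nat) : R :=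
  \sum_(1 <= k < (Kpar alpha M).+1) \sum_(1 <= l < (Kpar' alpha M).+1)
     gen (Kpar alpha M) eps k * gen (Kpar' alpha M) eps l *
     (phi l (phi k m) == phi l (phi k mh))%:R.

Definition typeI_err (gen : nat -> R -> nat -> R) (alpha eps : R)
    (M m : nat) : R :=
  \sum_(1 <= k < (Kpar alpha M).+1) \sum_(1 <= l < (Kpar' alpha M).+1)
     gen (Kpar alpha M) eps k * gen (Kpar' alpha M) eps l *
     (phi l (phi k m) != phi l (phi k m))%:R.

Definition typeII_err (gen : nat -> R -> nat -> R) (alpha eps : R)
    (M m mh : nat) : R := accept_prob gen alpha eps M m mh.

(* max over m <> mh in {1,...,M} of the type II error (0 if no such pair) *)
Definition max_typeII (gen : nat -> R -> nat -> R) (alpha eps : R)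
    (M : nat) : R :=
  \big[Num.max/0]_(1 <= m < M.+1)
    \big[Num.max/0]_(1 <= mh < M.+1 | m != mh) typeII_err gen alpha eps M m mh.

End Defs.

(* Main.v *)
Require Import Defs.
From HB Require Import structures.
From mathcomp Require Import all_boot all_order all_algebra.
From mathcomp Require Import all_classical all_reals all_analysis.
From mathcomp Require Import zify ring lra.
Import Order.TTheory GRing.Theory Num.Theory.
Import numFieldNormedType.Exports.
Set Implicit Arguments. Unset Strict Implicit. Unset Printing Implicit Defensive.

Definition pcnt (N : nat) : nat := \sum_(0 <= p < N.+1 | prime p) 1.

Lemma central_binom_ge n : 2 ^ n <= 'C(n.*2, n).
Proof.
elim: n => [//|n IH].
rewrite doubleS binS expnS.
have -> : 'C(n.*2.+1, n.+1) = 'C(n.*2.+1, n).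
  by rewrite -[in RHS]bin_sub; [congr 'C(_,_); lia | lia].
have h : 'C(n.*2, n) <= 'C(n.*2.+1, n) by apply: leq_bin2l.
lia.
Qed.

Lemma sum_le_t_eq t B : \sum_(1 <= k < B.+1) (k <= t) = minn B t.
Proof.
elim: B => [|B IH]; first by rewrite big_geq //; lia.
rewrite big_nat_recr //= IH.
case: (ltnP B t) => h /=; lia.
Qed.

Lemma sum_le_t t B : \sum_(1 <= k < B.+1) (k <= t) <= t.
Proof. rewrite sum_le_t_eq; lia. Qed.

Lemma sum_div_ext n p : prime p ->
  \sum_(1 <= k < n.+1) n %/ p ^ k = \sum_(1 <= k < n.*2.+1) n %/ p ^ k.
Proof.
move=> pp.
rewrite [in RHS](big_cat_nat _ (n := n.+1)) //=; last by rewrite ltnS -addnn leq_addr.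
rewrite [X in _ = _ + X]big1_seq ?addn0 // => k /andP [_].
rewrite mem_index_iota => /andP [hk _].
apply: divn_small.
have := ltn_expl k (prime_gt1 pp). lia.
Qed.

Lemma logn_binom_le p n : prime p -> 0 < n -> p ^ logn p 'C(n.*2, n) <= n.*2.
Proof.
move=> pp.
move=> n0; case: n n0 => [//|n] _.
set m := n.+1.
have p1 := prime_gt1 pp.
set t := trunc_log p m.*2.
suff h : logn p 'C(m.*2, m) <= t.
  apply: leq_trans (leq_pexp2l (ltnW p1) h) _.
  apply: trunc_logP => //; lia.
have hf := bin_fact (leq_addr m m : m <= m + m).
rewrite -addnn in hf *. rewrite addnK in hf.
have Cpos : 0 < 'C(m + m, m) by rewrite bin_gt0; lia.
have := congr1 (logn p) hf.
rewrite lognM // ?muln_gt0 ?fact_gt0 // lognM ?fact_gt0 //.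
rewrite !logn_fact // sum_div_ext // -addnn => e.
have key : \sum_(1 <= k < (m + m).+1) (m + m) %/ p ^ k <=
   \sum_(1 <= k < (m + m).+1) ((m %/ p ^ k) + (m %/ p ^ k) + (k <= t)).
  apply: leq_sum => k _.
  case: (leqP k t) => hk.
    have : 0 < p ^ k by rewrite expn_gt0; lia.
    move=> q0. rewrite /=. 
    have := divn_eq m (p ^ k). have := ltn_pmod m q0.
    have := divn_eq (m + m) (p ^ k). have := ltn_pmod (m + m) q0.
    nia.
  rewrite /= addn0.
  have : m + m < p ^ k.
    rewrite ltnNge; apply/negP => hle.
    have := trunc_log_max p1 hle. have : t = trunc_log p (m + m) by rewrite /t addnn. lia.
  move=> hlt. rewrite (divn_small hlt). by [].
rewrite !big_split /= in key.
have := sum_le_t t (m + m).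
lia.
Qed.

Lemma prod_if_const (P : pred nat) c B :
  \prod_(0 <= p < B) (if P p then c else 1) = c ^ (\sum_(0 <= p < B | P p) 1).
Proof.
elim: B => [|b IH]; first by rewrite big_geq // big_geq.
rewrite big_nat_recr //= IH [in RHS]big_mkcond big_nat_recr //= -big_mkcond /=.
by case: (P b); rewrite ?expnD ?muln1 ?addn0 ?expn1.
Qed.

Lemma binom_le_pow n : 0 < n -> 'C(n.*2, n) <= n.*2 ^ pcnt n.*2.
Proof.
move=> n0.
set C := 'C(n.*2, n).
have C0 : 0 < C by rewrite bin_gt0 -addnn leq_addr.
rewrite -{1}(partnT C0) (widen_partn _ (leq_addr n.*2 C)).
apply: (@leq_trans (\prod_(0 <= p < (C + n.*2).+1)
   (if prime p && (p < n.*2.+1) then n.*2 else 1))).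
  rewrite big_mkcond /=.
  apply: leq_prod => p _.
  case pp: (prime p) => /=; last by rewrite lognE pp.
  have h := logn_binom_le pp n0.
  case: ifP => hp //.
  rewrite -/C in h.
  case e: (logn p C) h => [//|e'].
  rewrite expnS => h.
  have : p <= p * p ^ e' by rewrite leq_pmulr // expn_gt0 prime_gt0.
  lia.
rewrite prod_if_const /pcnt (@big_nat_widen _ _ _ 0 n.*2.+1 (C + n.*2).+1) //.
by rewrite ltnS leq_addl.
Qed.

Lemma leq_exp_base m n e : m <= n -> m ^ e <= n ^ e.
Proof. by case: e => [//|e] h; rewrite leq_exp2r. Qed.

Lemma pcnt_mono a b : a <= b -> pcnt a <= pcnt b.
Proof.
move=> ab; rewrite /pcnt (@big_nat_widen _ _ _ 0 a.+1 b.+1) // big_mkcondr /=.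
by apply: leq_sum => i _; case: ifP.
Qed.

Lemma cheb_nat N : 2 <= N -> 2 ^ N./2 <= N ^ pcnt N.
Proof.
move=> N2.
have n0 : 0 < N./2 by rewrite half_gt0.
have hn : N./2.*2 <= N by rewrite -{2}(odd_double_half N) leq_addl.
apply: leq_trans (central_binom_ge _) _.
apply: leq_trans (binom_le_pow n0) _.
apply: leq_trans (leq_exp_base _ hn) _.
apply: leq_pexp2l; first by lia.
exact: pcnt_mono.
Qed.

Lemma prod_primes_dvd d B : 0 < d ->
  \prod_(0 <= p < B | prime p && (p %| d)) p %| d.
Proof.
move=> d0; elim: B => [|b IH]; first by rewrite big_geq.
rewrite big_mkcond big_nat_recr //= -big_mkcond /=.
case: ifP => [/andP [pb bd] | _]; last by rewrite muln1.
rewrite Gauss_dvd ?IH ?bd //.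
rewrite big_seq_cond.
apply: (big_ind (fun x => coprime x b)); first by rewrite coprime1n.
  by move=> x y hx hy; rewrite coprimeMl hx hy.
move=> p /andP [].
rewrite mem_index_iota => /andP [_ pl] /andP [pp _].
rewrite prime_coprime // dvdn_prime2 //.
by apply/negP => /eqP e; rewrite e ltnn in pl.
Qed.

Lemma count_prime_div d B : 0 < d ->
  2 ^ (\sum_(0 <= p < B | prime p && (p %| d)) 1) <= d.
Proof.
move=> d0.
rewrite -prod_if_const -big_mkcond /=.
apply: leq_trans (dvdn_leq d0 (prod_primes_dvd B d0)).
apply: leq_prod => p /andP [pp _].
exact: prime_gt1.
Qed.

Definition dist (a b : nat) : nat := (a - b) + (b - a).

Lemma mod_dist q a b : a %% q == b %% q -> q %| dist a b.
Proof.
rewrite /dist => h.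
case: (leqP b a) => hab.
  have -> : b - a = 0 by lia.
  by rewrite addn0 -eqn_mod_dvd.
have -> : a - b = 0 by lia.
by rewrite add0n -eqn_mod_dvd ?(ltnW hab) // eq_sym.
Qed.

Lemma phi_eq_cases m mh k l : m != mh ->
  phi l (phi k m) == phi l (phi k mh) ->
  [|| ~~ prime k, ~~ prime l, prime k && (k %| dist m mh)
    | [&& prime l, l %| dist (m %% k) (mh %% k) & 0 < dist (m %% k) (mh %% k)]].
Proof.
move=> neq; rewrite /phi eqSS => h.
case pk: (prime k) => //=; case pl: (prime l) => //=.
case: (posnP (dist (m %% k) (mh %% k))) => hd.
  have e : m %% k = mh %% k by move: hd; rewrite /dist; lia.
  by rewrite mod_dist // e.
rewrite /= ?andbT; apply/orP; right.
have := mod_dist h; rewrite /dist; congr (_ %| _); lia.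
Qed.


Local Open Scope classical_set_scope.
Local Open Scope ring_scope.

Lemma ceil_natP (R : realType) (x : R) : 0 <= x ->
  x <= (ceil_nat x)%:R /\ (ceil_nat x)%:R < x + 1.
Proof.
move=> x0.
have c0 : (0 <= Num.ceil x)%R by rewrite ceil_ge0 (lt_le_trans _ x0) // ltrN10.
rewrite /ceil_nat natr_absz ger0_norm //.
split; first exact: ceil_ge.
have := ceilB1_lt x; rewrite intrD /= => h.
by rewrite -ltrBlDr.
Qed.

Lemma ln2_gt0 (R : realType) : 0 < ln (2 : R).
Proof. by rewrite ln_gt0 // ltr1n. Qed.

Lemma log2_le (R : realType) (x y : R) : 0 < x -> x <= y -> log2 x <= log2 y.
Proof.
move=> x0 xy; rewrite /log2 ler_pM2r ?invr_gt0 ?ln2_gt0 //.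
by rewrite ler_ln // posrE (lt_le_trans x0 xy).
Qed.

Lemma log2M (R : realType) (x y : R) : 0 < x -> 0 < y ->
  log2 (x * y) = log2 x + log2 y.
Proof. by move=> x0 y0; rewrite /log2 lnM ?posrE // mulrDl. Qed.

Lemma log2_powR (R : realType) (x a : R) : log2 (x `^ a) = a * log2 x.
Proof. by rewrite /log2 ln_powR mulrA. Qed.

Lemma log2_2 (R : realType) : log2 (2 : R) = 1.
Proof. by rewrite /log2 divff // gt_eqF // ln2_gt0. Qed.

Lemma log2_ge (R : realType) (x Y : R) : 0 < x -> expR (Y * ln 2) <= x ->
  Y <= log2 x.
Proof.
move=> x0 h; rewrite /log2 ler_pdivlMr ?ln2_gt0 //.
by rewrite -(expRK (Y * ln 2)) ler_ln ?posrE ?expR_gt0.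
Qed.

Lemma ln_le_powR (R : realType) (x b : R) : 0 < x -> 0 < b -> ln x <= x `^ b / b.
Proof.
move=> x0 b0; rewrite ler_pdivlMr // mulrC -ln_powR.
by apply/ltW/ln_sublinear; rewrite powR_gt0.
Qed.

Lemma cheb_real (R : realType) (N : nat) : (2 <= N)%N ->
  N%:R * ln (2 : R) / 4 <= (pcnt N)%:R * ln (N%:R : R).
Proof.
move=> N2.
have h := cheb_nat N2.
have hR : ((2 ^ N./2)%:R : R) <= (N ^ pcnt N)%:R by rewrite ler_nat.
have l := ler_ln (R := R).
rewrite !natrX in hR.
have p1 : (0 : R) < 2 ^+ N./2 by rewrite exprn_gt0.
have p2 : (0 : R) < N%:R ^+ pcnt N by rewrite exprn_gt0 // ltr0n; lia.
rewrite -ler_ln ?posrE // !lnXn ?ltr0n // in hR; last by lia.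
have h4 : (N <= 4 * N./2)%N.
  have := odd_double_half N; have := half_gt0 N; rewrite N2.
  case: (odd N) => /=; rewrite -addnn; lia.
have h4R : (N%:R : R) <= 4 * (N./2)%:R by rewrite -natrM ler_nat.
rewrite -(mulr_natr (ln (2:R))) -(mulr_natl (ln (N%:R:R))) in hR.
apply: le_trans hR.
rewrite ler_pdivrMr // mulrAC mulrC.
by rewrite -mulrA ler_wpM2l ?ln_ge0 ?ler1n.
Qed.

Lemma chain_bound (R : realType) (N p l P Q b L y G e: R) : 0 < p -> 0 < l -> 0 < P -> 0 < Q -> 0 < b -> 0 < L -> 0 < y -> 0 < G -> 0 < e ->
  N * L / 4 <= p * l -> b * l <= P -> N = P * Q -> y * G <= Q -> 4 / (b * L) / e <= G -> y / p <= e.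
Proof.
move=> p0 l0 P0 Q0 b0 L0 y0 G0 e0 hc hb hN hG hC.
have s1 : N * L * b <= 4 * p * P.
  have := ler_wpM2l (ltW p0) hb. have := ler_wpM2r (ltW b0) hc. nra.
rewrite hN in s1.
have s2 : Q * L * b <= 4 * p.
  rewrite -(ler_pM2l P0). nra.
have s3 : y * G * L * b <= 4 * p.
  apply: le_trans s2. have := ler_wpM2r (ltW (mulr_gt0 L0 b0)) hG. nra.
rewrite ler_pdivrMr // .
have bL : 0 < b * L by apply: mulr_gt0.
rewrite ler_pdivrMr // ler_pdivrMr // in hC.
have := ler_wpM2l (ltW y0) hC. have := ler_wpM2r (ltW e0) s3. nra.
Qed.

Lemma pcnt_small (R : realType) (alpha : R) : 1 < alpha -> forall e : R, 0 < e ->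
  exists Y : R, forall y : R, Y <= y -> forall N : nat, y `^ alpha <= N%:R ->
  (0 < pcnt N)%N /\ y / (pcnt N)%:R <= e.
Proof.
move=> a1 e e0.
have a0 : 0 < alpha by apply: lt_trans a1.
set b := (alpha - 1) / (2 * alpha).
set g := (alpha - 1) / 2.
have b0 : 0 < b by rewrite /b divr_gt0 ?subr_gt0 // mulr_gt0.
have g0 : 0 < g by rewrite /g divr_gt0 ?subr_gt0.
have L0 := ln2_gt0 R.
set X := 4 / (b * ln 2) / e.
have X0 : 0 < X by rewrite /X !divr_gt0 // mulr_gt0.
exists (Num.max 2 (X `^ g^-1)) => y.
rewrite ge_max => /andP [y2 yX] N hN.
have y0 : 0 < y by apply: lt_le_trans y2.
have y1 : 1 <= y by apply: le_trans y2; rewrite ler1n.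
have yN : y <= N%:R by apply: le_trans hN; apply: le1r_powR => //; apply: ltW.
have N2 : (2 <= N)%N by rewrite -(ler_nat R); apply: le_trans yN.
have NR0 : (0 : R) < N%:R by rewrite ltr0n; lia.
have l0 : 0 < ln (N%:R : R) by rewrite ln_gt0 // ltr1n.
have hc := cheb_real R N2.
have p0 : (0 < pcnt N)%N.
  rewrite lt0n; apply/negP => /eqP h0.
  rewrite h0 mul0r in hc.
  have : 0 < N%:R * ln (2 : R) / 4 by rewrite !mulr_gt0.
  by rewrite ltNge hc.
split => //.
have pR : (0 : R) < (pcnt N)%:R by rewrite ltr0n.
apply: (@chain_bound R N%:R _ (ln N%:R) (N%:R `^ b) (N%:R `^ (1 - b)) b (ln 2) y (y `^ g) e) => //.
- by rewrite powR_gt0.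
- by rewrite powR_gt0.
- by rewrite powR_gt0.
- rewrite -ln_powR; apply/ltW/ln_sublinear; by rewrite powR_gt0.
- rewrite -powRD; last by rewrite (gt_eqF NR0) implybT.
  by rewrite addrC subrK powRr1 // ltW.
- have e1 : alpha * (1 - b) = 1 + g.
    rewrite /b /g; field; by rewrite gt_eqF.
  have hb1 : 0 <= 1 - b.
    rewrite subr_ge0 /b ler_pdivrMr ?mulr_gt0 // mul1r; lra.
  have hx : y `^ alpha \in Num.nneg by rewrite nnegrE powR_ge0.
  have hy : (N%:R : R) \in Num.nneg by rewrite nnegrE ler0n.
  have := @ge0_ler_powR R (1 - b) hb1 _ _ hx hy hN.
  rewrite -powRrM e1 powRD ?(powRr1 (ltW y0)) //; last by rewrite (gt_eqF y0) implybT.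
- have hx : X `^ g^-1 \in Num.nneg by rewrite nnegrE powR_ge0.
  have hy : y \in Num.nneg by rewrite nnegrE ltW.
  have := @ge0_ler_powR R g (ltW g0) _ _ hx hy yX.
  by rewrite -powRrM mulVf ?gt_eqF // (powRr1 (ltW X0)).
Qed.

Lemma log2_ev (R : realType) (Y : R) : \forall M \near \oo, Y <= log2 (M%:R : R).
Proof.
have := nbhs_infty_ger (Num.max 1 (expR (Y * ln 2))).
apply: filterS => M; rewrite ge_max => /andP [h1 h2].
apply: log2_ge => //; exact: lt_le_trans ltr01 h1.
Qed.

Lemma cnt_log2 (R : realType) (c d : nat) : (2 ^ c <= d)%N -> (c%:R : R) <= log2 d%:R.
Proof.
move=> h.
have d0 : (0 < d)%N by apply: leq_trans h; rewrite expn_gt0.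
rewrite /log2 ler_pdivlMr ?ln2_gt0 //.
have : ((2 ^ c)%:R : R) <= d%:R by rewrite ler_nat.
by rewrite natrX -ler_ln ?posrE ?exprn_gt0 ?ltr0n // lnXn // mulr_natl.
Qed.

Lemma sum_const_cond (R : realType) (r : seq nat) (P : pred nat) (c : R) :
  \sum_(i <- r | P i) c = (\sum_(i <- r | P i) 1)%N%:R * c.
Proof. by rewrite natr_sum mulr_suml; apply: eq_bigr => i _; rewrite mul1r. Qed.

Lemma gen_facts (R : realType) (gen : nat -> R -> nat -> R) N eps :
  prob_prime_generator gen -> (2 <= N)%N -> 0 < eps ->
  [/\ forall x, 0 <= gen N eps x,
      \sum_(1 <= x < N.+1) gen N eps x = 1,
      \sum_(1 <= x < N.+1 | ~~ prime x) gen N eps x <= eps &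
      forall d, (0 < d)%N ->
        \sum_(1 <= x < N.+1 | prime x && (x %| d)%N) gen N eps x * (pcnt N)%:R
          <= log2 d%:R].
Proof.
move=> hgen N2 e0.
have [g0 _ gsum geq gnp] := hgen N eps N2 e0.
split => // d d0.
have [p pp pN] : exists2 p, prime p & (p <= N)%N by exists 2%N.
have hc : gen N eps p * (pcnt N)%:R <= 1.
  rewrite -[leRHS]gsum (bigID prime) /=.
  apply: (@le_trans _ _ (\sum_(1 <= i < N.+1 | prime i) gen N eps i)); last by rewrite lerDl; apply: sumr_ge0.
  rewrite big_seq_cond (eq_bigr (fun _ => gen N eps p)); last first.
    move=> x /andP [] ; rewrite mem_index_iota => /andP [_ xN] px.
    by apply: geq => //.
  rewrite -big_seq_cond sum_const_cond mulrC /pcnt big_ltn_cond //.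
have hs : \sum_(1 <= x < N.+1 | prime x && (x %| d)%N) gen N eps x =
    \sum_(1 <= x < N.+1 | prime x && (x %| d)%N) gen N eps p.
  rewrite big_seq_cond [RHS]big_seq_cond; apply: eq_bigr => x.
  rewrite mem_index_iota => /andP [/andP [_ xN]] /andP [px _].
  by apply: geq.
rewrite -mulr_suml hs sum_const_cond -mulrA.
apply: le_trans (_ : (\sum_(1 <= x < N.+1 | prime x && (x %| d)%N) 1)%N%:R * 1 <= _).
  by rewrite ler_wpM2l // ler0n.
rewrite mulr1; apply: cnt_log2.
have := count_prime_div N.+1 d0.
by rewrite big_ltn_cond.
Qed.



Lemma ind_bound (R : realType) (b c1 c2 c3 c4 : bool) : (b -> [|| c1, c2, c3 | c4]) ->
  (b%:R : R) <= c1%:R + c2%:R + c3%:R + c4%:R.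
Proof.
case: b => [/(_ isT) h|_]; last by rewrite !addr_ge0 ?ler0n.
by case: c1 h; case: c2; case: c3; case: c4 => //= _; rewrite ?addr0 ?add0r; lra.
Qed.

Lemma pcnt_gt0 N : (2 <= N)%N -> (0 < pcnt N)%N.
Proof.
move=> N2; apply: leq_trans (pcnt_mono N2).
by rewrite /pcnt big_ltn_cond // big_ltn_cond // big_ltn_cond // big_geq.
Qed.

Lemma sum_ind (R : realType) (F : nat -> R) (P : pred nat) a b :
  \sum_(a <= i < b) F i * (P i)%:R = \sum_(a <= i < b | P i) F i.
Proof.
by rewrite [RHS]big_mkcond /=; apply: eq_bigr => i _; case: (P i); rewrite ?mulr1 ?mulr0.
Qed.

Lemma accept_le (R : realType) (gen : nat -> R -> nat -> R) (alpha eps : R) (M m mh : nat) :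
  prob_prime_generator gen -> 0 < eps -> (2 <= Kpar alpha M)%N -> (2 <= Kpar' alpha M)%N ->
  (1 <= m <= M)%N -> (1 <= mh <= M)%N -> m != mh ->
  accept_prob gen alpha eps M m mh <=
   eps + eps + log2 M%:R / (pcnt (Kpar alpha M))%:R
   + log2 (Kpar alpha M)%:R / (pcnt (Kpar' alpha M))%:R.
Proof.
move=> hgen e0 K2 K'2 hm hmh neq.
rewrite /accept_prob.
set K := Kpar alpha M; set K' := Kpar' alpha M.
have [g0 gsum gnp gbad] := gen_facts hgen K2 e0.
have [h0 hsum hnp hbad] := gen_facts hgen K'2 e0.
set g := gen K eps; set h := gen K' eps.
set D := dist m mh.
have D0 : (0 < D)%N by move: neq; rewrite /D /dist; case: eqP => //; lia.
have DM : (D <= M)%N by rewrite /D /dist; lia.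
have piK0 : (0 : R) < (pcnt K)%:R by rewrite ltr0n pcnt_gt0.
have piK'0 : (0 : R) < (pcnt K')%:R by rewrite ltr0n pcnt_gt0.
set B3 := log2 M%:R / (pcnt K)%:R.
set B4 := log2 K%:R / (pcnt K')%:R.
have B40 : 0 <= B4.
  apply: divr_ge0; last exact: ltW.
  apply: divr_ge0; last exact/ltW/ln2_gt0.
  by apply: ln_ge0; rewrite ler1n; lia.
set I1 := fun k : nat => ((~~ prime k) : bool)%:R : R.
set I2 := I1.
set I3 := fun k : nat => ((prime k && (k %| D)%N) : bool)%:R : R.
set I4 := fun k l : nat => ([&& prime l, (l %| dist (m %% k) (mh %% k))%N
                               & (0 < dist (m %% k) (mh %% k))%N] : bool)%:R : R.
have T1 : \sum_(1 <= k < K.+1) g k * I1 k <= eps by rewrite /I1 sum_ind.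
have T2 : \sum_(1 <= l < K'.+1) h l * I2 l <= eps by rewrite /I2 /I1 sum_ind.
have T3 : \sum_(1 <= k < K.+1) g k * I3 k <= B3.
  rewrite /I3 sum_ind /B3 ler_pdivlMr // mulr_suml.
  apply: le_trans (gbad D D0) _.
  apply: log2_le; by rewrite ?ler_nat ?ltr0n.
have T4 : forall k, (1 <= k <= K)%N -> \sum_(1 <= l < K'.+1) h l * I4 k l <= B4.
  move=> k /andP [k1 kK].
  rewrite /I4 sum_ind.
  set E := dist (m %% k) (mh %% k).
  case: (posnP E) => E0.
    rewrite big_pred0 //= => l; by rewrite !andbF.
  under eq_bigl => l do rewrite andbT.
  rewrite /B4 ler_pdivlMr // mulr_suml.
  apply: le_trans (hbad E E0) _.
  apply: log2_le; rewrite ?ltr0n // ler_nat.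
  have : (m %% k < k)%N by rewrite ltn_mod; lia.
  have : (mh %% k < k)%N by rewrite ltn_mod; lia.
  rewrite /E /dist; lia.
have step1 : forall k l, (g k * h l * (phi l (phi k m) == phi l (phi k mh))%:R)
    <= g k * h l * (I1 k + I2 l + I3 k + I4 k l).
  move=> k l; apply: ler_wpM2l; first by apply: mulr_ge0.
  by apply: ind_bound; apply: phi_eq_cases.
apply: le_trans (_ : \sum_(1 <= k < K.+1) g k * (I1 k + I3 k + eps + B4) <= _).
  rewrite big_seq [X in _ <= X]big_seq; apply: ler_sum => k.
  rewrite mem_index_iota => /andP [k1 kK].
  rewrite ltnS in kK.
  apply: le_trans (_ : \sum_(1 <= l < K'.+1) g k * h l * (I1 k + I2 l + I3 k + I4 k l) <= _).
    by apply: ler_sum => l _; apply: step1.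
  under eq_bigr => l _ do rewrite -mulrA.
  rewrite -mulr_sumr; apply: ler_wpM2l => //.
  rewrite (eq_bigr (fun l => h l * (I1 k + I3 k) + h l * I2 l + h l * I4 k l));
    last by move=> l _; ring.
  rewrite !big_split /= -mulr_suml hsum mul1r.
  have := T4 k (introT andP (conj k1 kK)). lra.
rewrite (eq_bigr (fun k => g k * I1 k + g k * I3 k + g k * (eps + B4)));
  last by move=> k _; ring.
rewrite !big_split /= -mulr_suml gsum mul1r.
lra.
Qed.

Lemma lnlin_small (R : realType) (A B a : R) : 0 <= A -> 0 <= B -> 0 < a ->
  forall e, 0 < e -> exists Y, 1 <= Y /\ forall y, Y <= y ->
    A + B * ln (1 + a * y) <= e * y.
Proof.
move=> A0 B0 a0 e e0.
set q := (1 + a) `^ (2^-1).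
have q0 : 0 <= q by apply: powR_ge0.
set X := (A + 2 * B * q) / e.
have X0 : 0 <= X by apply: divr_ge0; [apply: addr_ge0 => //; rewrite !mulr_ge0 | apply: ltW].
exists (Num.max 1 (X `^ 2)); split; first by rewrite le_max lexx.
move=> y; rewrite ge_max => /andP [y1 yX].
have y0 : 0 < y by apply: lt_le_trans y1.
set s := y `^ (2^-1).
have ss : y = s * s.
  rewrite /s -powRD; last by rewrite gt_eqF.
  have h12 : (2^-1 + 2^-1 : R) = 1 by field.
  by rewrite h12 powRr1 // ltW.
have s1 : 1 <= s.
  rewrite /s; apply: (le_trans (_ : 1 <= 1 `^ (2^-1))); first by rewrite powR1.
  apply: ge0_ler_powR => //; by rewrite ?invr_ge0 ?nnegrE ?ler0n // ltW.
have sX : X <= s.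
  rewrite /s; apply: (le_trans (_ : X <= (X `^ 2) `^ (2^-1))).
    by rewrite -powRrM mulfV // powRr1.
  apply: ge0_ler_powR => //; by rewrite ?invr_ge0 ?nnegrE ?ler0n ?powR_ge0 // ltW.
have h1 : ln (1 + a * y) <= 2 * ((1 + a * y) `^ (2^-1)).
  have := @ln_le_powR R (1 + a * y) (2^-1).
  rewrite invrK => h; rewrite [X in _ <= X]mulrC; apply: h; last by rewrite invr_gt0.
  by rewrite addr_gt0 // mulr_gt0.
have h2 : (1 + a * y) `^ (2^-1) <= q * s.
  rewrite /q /s -powRM; last (by apply: ltW); last by rewrite addr_ge0 // ltW.
  apply: ge0_ler_powR; rewrite ?invr_ge0 ?ler0n // ?nnegrE.
  - by rewrite addr_ge0 // mulr_ge0 // ltW.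
  - by rewrite mulr_ge0 // ?addr_ge0 // ltW.
  - rewrite mulrDl mul1r lerD2r; lra.
have hX : A + 2 * B * q <= e * s.
  by rewrite -ler_pdivrMl // mulrC.
have ey : e * y = e * s * s by rewrite {1}ss mulrA.
have := ler_wpM2r (le_trans ler01 s1) hX.
have : B * ln (1 + a * y) <= B * (2 * (q * s)).
  apply: ler_wpM2l => //; apply: le_trans h1 _; apply: ler_wpM2l => //.
have : A <= A * s by rewrite -{1}(mulr1 A) ler_wpM2l.
have es0 : 0 <= e * s by apply: mulr_ge0; lra.
have : e * s <= e * s * s by rewrite -{1}(mulr1 (e * s)) ler_wpM2l.
rewrite ey; nra.
Qed.

Lemma final_alg (R : realType) (a L b e : R) : 1 < a -> 1 <= L -> a * L <= b ->
  0 < e -> b - a * L <= e * (a * a * L) -> `|a^-1 - L / b| <= e.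
Proof.
move=> a1 L1 hb e0 hu.
have a0 : 0 < a by lra.
have aL : 0 < a * L by rewrite mulr_gt0 //; lra.
have b0 : 0 < b by lra.
have -> : a^-1 - L / b = (b - a * L) / (a * b).
  by field; rewrite !gt_eqF.
rewrite ger0_norm; last by rewrite divr_ge0 ?subr_ge0 // mulr_ge0 // ltW.
rewrite ler_pdivrMr ?mulr_gt0 //.
have : e * (a * (a * L)) <= e * (a * b).
  apply: ler_wpM2l; first exact: ltW. apply: ler_wpM2l => //; exact: ltW.
rewrite !mulrA in hu *; lra.
Qed.

Lemma log2_1 (R : realType) : log2 (1 : R) = 0.
Proof. by rewrite /log2 ln1 mul0r. Qed.

Lemma log2_ge0 (R : realType) (x : R) : 1 <= x -> 0 <= log2 x.
Proof. by move=> x1; rewrite -(log2_1 R) log2_le. Qed.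

Lemma Kpar_bounds (R : realType) (alpha x : R) (M : nat) : 1 < alpha ->
  1 <= x -> x = log2 (M%:R : R) ->
  alpha * log2 x <= log2 (Kpar alpha M)%:R <= 1 + alpha * log2 x /\
  x <= (Kpar alpha M)%:R.
Proof.
move=> a1 x1 hx; subst x.
set L := log2 M%:R.
set P := L `^ alpha.
have P1 : L <= P by apply: le1r_powR => //; apply: ltW.
have P0 : 0 < P by apply: lt_le_trans P1; apply: lt_le_trans x1.
have [hK1 hK2] := ceil_natP (ltW P0).
rewrite /Kpar -/L -/P; split; last exact: le_trans P1 hK1.
apply/andP; split.
  by rewrite -log2_powR -/P; apply: log2_le.
rewrite -log2_powR -/P.
have -> : 1 + log2 P = log2 (2 * P) by rewrite log2M // log2_2.
apply: log2_le; first by apply: lt_le_trans P0 hK1.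
apply: le_trans (ltW hK2) _; have : 1 <= P by apply: le_trans P1. lra.
Qed.

Lemma blocklen_bounds (R : realType) (alpha : R) (M : nat) : 1 < alpha ->
  2 <= log2 (M%:R : R) ->
  alpha * log2 (log2 (M%:R : R)) <= (blocklen alpha M)%:R /\
  (blocklen alpha M)%:R <= alpha * log2 (log2 (M%:R : R)) + 6
     + 2 * alpha * log2 (1 + alpha * log2 (log2 (M%:R : R))).
Proof.
move=> a1 L2.
set L := log2 M%:R.
set La := log2 L.
have La1 : 1 <= La by rewrite /La -(log2_2 R) log2_le.
have L1 : 1 <= L by apply: le_trans L2; rewrite ler1n.
have [/andP [hz1 hz2] _] := Kpar_bounds a1 L1 erefl.
set K := Kpar alpha M.
set z := log2 (K%:R : R).
rewrite -/z -/La in hz1 hz2.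
have aLa : 1 <= alpha * La.
  rewrite -(mulr1 1) ler_pM //; lra.
have z1 : 1 <= z by apply: le_trans hz1.
have [/andP [hw1 hw2] _] := Kpar_bounds (M := K) a1 z1 erefl.
have hw1' : 0 <= log2 ((Kpar alpha K)%:R : R).
  apply: le_trans hw1; apply: mulr_ge0; [lra | exact: log2_ge0].
have lz : log2 z <= log2 (1 + alpha * La).
  by apply: log2_le; lra.
have [c11 c12] := ceil_natP (le_trans ler01 z1).
have [c21 c22] := ceil_natP hw1'.
rewrite /blocklen natrD natrM -/K.
rewrite /Kpar' -/K -/z.
set c1 := ceil_nat z; set c2 := ceil_nat (log2 ((Kpar alpha K)%:R : R)).
rewrite -/c1 -/c2 in c11 c12 c21 c22.
have hlz : alpha * log2 z <= alpha * log2 (1 + alpha * La).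
  by apply: ler_wpM2l => //; lra.
split; first by lra.
lra.
Qed.

Local Open Scope classical_set_scope.
Local Open Scope ring_scope.

Lemma bigmax_le_nat (R : realType) (r : seq nat) (P : pred nat) (F : nat -> R) (B : R) :
  0 <= B -> (forall i, i \in r -> P i -> F i <= B) ->
  \big[Num.max/0]_(i <- r | P i) F i <= B.
Proof.
move=> B0 h; rewrite big_seq_cond; apply: (big_ind (fun x => x <= B)) => //.
  by move=> x y hx hy; rewrite ge_max hx hy.
by move=> i /andP [ir Pi]; apply: h.
Qed.

Lemma bigmax_ge0_nat (R : realType) (r : seq nat) (P : pred nat) (F : nat -> R) :
  0 <= \big[Num.max/0]_(i <- r | P i) F i.
Proof.
elim: r => [|x r IH]; first by rewrite big_nil.
rewrite big_cons; case: ifP => _ //.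
by rewrite le_max IH orbT.
Qed.

Theorem theorem8 (R : realType) (alpha : R) (halpha : 1 < alpha)
  (gen : nat -> R -> nat -> R) (hgen : prob_prime_generator gen)
  (eps : nat -> R) (heps : forall M, 0 < eps M) :
  [/\ (forall M m : nat, (1 <= m <= M)%N -> typeI_err gen alpha (eps M) M m = 0),
      (eps @ \oo --> 0 ->
         (fun M : nat => max_typeII gen alpha (eps M) M) @ \oo --> 0) &
      (fun M : nat => log2 (log2 M%:R) / (blocklen alpha M)%:R) @ \oo --> alpha^-1].
Proof.
have a0 : 0 < alpha by apply: lt_trans halpha.
split.
- move=> M m _; rewrite /typeI_err big1 // => k _; rewrite big1 // => l _.
  by rewrite eqxx mulr0.
- move=> heps0.
  apply/cvgr0Pnorm_le => e e0.
  have e40 : 0 < e / 4 by rewrite divr_gt0.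
  have [Y hY] := pcnt_small halpha e40.
  set Y2 := Num.max 2 Y.
  have ev1 := log2_ev (Num.max (expR (Y2 * ln 2)) Y2).
  have ev2 : \forall M \near \oo, `|eps M| <= e / 4.
    by move/cvgr0Pnorm_le : heps0; apply.
  apply: filterS2 ev1 ev2 => M hL he.
  set L := log2 (M%:R : R).
  rewrite -/L ge_max in hL; case/andP: hL => hL1 hL2.
  have Y22 : 2 <= Y2 by rewrite le_max lexx.
  have YY2 : Y <= Y2 by rewrite le_max lexx orbT.
  have L2 : 2 <= L by apply: le_trans hL2.
  have L1 : 1 <= L by apply: le_trans L2; rewrite ler1n.
  have L0 : 0 < L by apply: lt_le_trans L1.
  have La : Y2 <= log2 L by apply: log2_ge.
  have [/andP [hz1 _] hK] := Kpar_bounds halpha L1 erefl.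
  set K := Kpar alpha M.
  rewrite -/K -/L in hz1 hK.
  have K2 : (2 <= K)%N by rewrite -(ler_nat R); apply: le_trans hK.
  have zY : Y2 <= log2 (K%:R : R).
    have aLa : log2 L <= alpha * log2 L.
      rewrite -{1}(mul1r (log2 L)) ler_wpM2r //; [| lra].
      have : 2 <= Y2 by []. have := La. lra.
    exact: (le_trans La (le_trans aLa hz1)).
  have z1 : 1 <= log2 (K%:R : R) by apply: le_trans zY; lra.
  have [_ hK'] := Kpar_bounds (M := K) halpha z1 erefl.
  have K'2 : (2 <= Kpar' alpha M)%N.
    rewrite -(ler_nat R); apply: le_trans hK'; lra.
  have [_ B3] := hY L (le_trans YY2 hL2) K (proj1 (ceil_natP (powR_ge0 _ _))).
  have [_ B4] := hY (log2 (K%:R : R)) (le_trans YY2 zY) (Kpar' alpha M)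
      (proj1 (ceil_natP (powR_ge0 _ _))).
  have he' : eps M <= e / 4 by apply: le_trans (ler_norm _) he.
  have hB : 0 <= eps M + eps M + L / (pcnt K)%:R
        + log2 (K%:R : R) / (pcnt (Kpar' alpha M))%:R.
    have := heps M.
    have : 0 <= L / (pcnt K)%:R by rewrite divr_ge0 ?ler0n // ltW.
    have : 0 <= log2 (K%:R : R) / (pcnt (Kpar' alpha M))%:R.
      by rewrite divr_ge0 ?ler0n //; lra.
    lra.
  rewrite ger0_norm; last exact: bigmax_ge0_nat.
  apply: le_trans (_ : _ <= eps M + eps M + L / (pcnt K)%:R
        + log2 (K%:R : R) / (pcnt (Kpar' alpha M))%:R) _; last by lra.
  rewrite /max_typeII; apply: bigmax_le_nat => // m; rewrite mem_index_iota => hm _.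
  apply: bigmax_le_nat => // mh; rewrite mem_index_iota => hmh neq.
  rewrite /typeII_err -/K -/L.
  apply: accept_le => //; rewrite ltnS in hm hmh *; lia.
- apply/cvgrPdist_le => e e0.
  have ea : 0 < e * (alpha * alpha) by rewrite !mulr_gt0.
  have B0 : 0 <= 2 * alpha / ln (2 : R).
    by rewrite divr_ge0 ?mulr_ge0 ?ler0n ?(ltW a0) // ltW // ln2_gt0.
  have [Y [Y1 hY]] := lnlin_small (ler0n R 6) B0 a0 ea.
  apply: filterS (log2_ev (Num.max (expR (Y * ln 2)) 2)) => M hL.
  rewrite ge_max in hL; case/andP: hL => hL1 hL2.
  set L := log2 (M%:R : R).
  rewrite -/L in hL1 hL2.
  have L0 : 0 < L by apply: lt_le_trans hL2.
  have La : Y <= log2 L by apply: log2_ge.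
  have [lo hi] := blocklen_bounds halpha hL2.
  rewrite -/L in lo hi.
  apply: final_alg => //.
    exact: le_trans Y1 La.
  have := hY (log2 L) La.
  have el : 2 * alpha * log2 (1 + alpha * log2 L)
      = 2 * alpha / ln 2 * ln (1 + alpha * log2 L).
    rewrite /log2; field; by rewrite gt_eqF // ln2_gt0.
  rewrite el in hi.
  lra.
Qed.
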